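(* Let $\Sigma \subseteq \Sigma'$ be vocabularies and let $T$ and $T'$ be $\Sigma$-equivalent theories over $\Sigma$ and $\Sigma'$ respectively. Let $O'$ be an operator on four-valued $\Sigma'$-structures and define the operator $O$ on four-valued $\Sigma$-structures by $O(\tilde I) = O'(\tilde I + \bot_{\Sigma'\setminus\Sigma})|_{\Sigma}$. If $O'$ is a propagator for $T'$, then $O$ is a propagator for $T$. If $O'$ is monotone, then $O$ is monotone as well.
   Context: Vocabularies are finite sets of predicate symbols. Truth values $\mathbf{t},\mathbf{f},\mathbf{u},\mathbf{i}$ with precision order $\mathbf{u} \le_p \mathbf{t} \le_p \mathbf{i}$, $\mathbf{u} \le_p \mathbf{f} \le_p \mathbf{i}$ ($\mathbf{t},\mathbf{f}$ incomparable). A four-valued $\Sigma$-structure $\tilde I$ has domain $D$ and assigns to each $P/n\in\Sigma$ a function $P^{\tilde I}:D^n\to\{\mathbf{t},\mathbf{f},\mathbf{u},\mathbf{i}\}$; two-valued structures (only $\mathbf{t},\mathbf{f}$) are identified with ordinary structures. $\tilde I \le_p \tilde J$ (same domain) iff pointwise $\le_p$. $\tilde I|_{\Sigma_0}$ is the restriction to $\Sigma_0\subseteq\Sigma$. For disjoint vocabularies $\Sigma_1,\Sigma_2$ and structures $\tilde I$ over $\Sigma_1$, $\tilde J$ over $\Sigma_2$ with the same domain, $\tilde I+\tilde J$ is the $(\Sigma_1\cup\Sigma_2)$-structure restricting to $\tilde I$ and $\tilde J$. $\bot_{\Sigma_0}$ denotes the $\Sigma_0$-structure (with the relevant domain) assigning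 $\mathbf{u}$ to every domain atom. A propagator for a theory $T$ over $\Sigma$ is a map $O$ on four-valued $\Sigma$-structures with (i) $\tilde I\le_p O(\tilde I)$ and (ii) $O(\tilde I)\le_p M$ for every two-valued model $M$ of $T$ with $\tilde I\le_p M$. An operator $O$ is monotone if $\tilde I\le_p\tilde J$ implies $O(\tilde I)\le_p O(\tilde J)$. Theories $T$ over $\Sigma_1$ and $T'$ over $\Sigma_2$, with $\Sigma\subseteq\Sigma_1\cap\Sigma_2$, are $\Sigma$-equivalent if for every two-valued $\Sigma$-structure $I$, $I$ has an expansion to $\Sigma_1$ satisfying $T$ iff $I$ has an expansion to $\Sigma_2$ satisfying $T'$. *)

(* Defs.v *)
From mathcomp Require Import all_boot finmap.
Unset Printing Implicit Defensive.
Local Open Scope fset_scope.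

Inductive FV := Ft | Ff | Fu | Fi.

Definition leq_p (a b : FV) : bool :=
  match a, b with
  | Fu, _ => true
  | Ft, Ft | Ft, Fi => true
  | Ff, Ff | Ff, Fi => true
  | Fi, Fi => true
  | _, _ => false
  end.

Section Structures.
Variables (Sym : choiceType) (ar : Sym -> nat).

Definition struct4 (S : {fset Sym}) (D : Type) :=
  forall P : Sym, P \in S -> (ar P).-tuple D -> FV.
Definition struct2 (S : {fset Sym}) (D : Type) :=
  forall P : Sym, P \in S -> (ar P).-tuple D -> bool.

Definition emb2 S D (M : struct2 S D) : struct4 S D :=
  fun P h t => if M P h t then Ft else Ff.

Definition le_p S D (I J : struct4 S D) : Prop :=
  forall P (h : P \in S) t, leq_p (I P h t) (J P h t).

Definition restrict4 S0 S (H : S0 `<=` S) D (I : struct4 S D) : struct4 S0 D :=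
  fun P h => I P (@fsubsetP _ S0 S H P h).
Definition restrict2 S0 S (H : S0 `<=` S) D (M : struct2 S D) : struct2 S0 D :=
  fun P h => M P (@fsubsetP _ S0 S H P h).

Definition bot4 S D : struct4 S D := fun _ _ _ => Fu.

Lemma in_fsetU_r (S1 S2 : {fset Sym}) P :
  P \in S1 `|` S2 -> (P \in S1) = false -> P \in S2.
Proof. by rewrite in_fsetU => /orP [-> //|]. Qed.

(* I + J : the (S1 u S2)-structure restricting to I on S1 and to J on S2
   (intended for disjoint S1, S2). *)
Definition plus4 S1 S2 D (I : struct4 S1 D) (J : struct4 S2 D)
  : struct4 (S1 `|` S2) D :=
  fun P h =>
    (if P \in S1 as b return (P \in S1) = b -> (ar P).-tuple D -> FV
     then fun e => I P e
     else fun e => J P (in_fsetU_r S1 S2 P h e)) erefl.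

Lemma fsubset_USD (S S' : {fset Sym}) : S' `<=` S `|` (S' `\` S).
Proof.
apply/fsubsetP => P hP; rewrite in_fsetU in_fsetD hP andbT.
by case: (P \in S).
Qed.

(* A theory over S, represented by its class of two-valued models
   (over arbitrary domains). *)
Definition theory (S : {fset Sym}) := forall D : Type, struct2 S D -> Prop.

Definition expands S S1 (H : S `<=` S1) D (I : struct2 S D) (M : struct2 S1 D)
  : Prop := forall P (h : P \in S) t, restrict2 S S1 H D M P h t = I P h t.

Definition sigma_equiv S S1 S2 (H1 : S `<=` S1) (H2 : S `<=` S2)
  (T : theory S1) (T' : theory S2) : Prop :=
  forall (D : Type) (I : struct2 S D),
    (exists M : struct2 S1 D, expands S S1 H1 D I M /\ T D M) <->
    (exists M' : struct2 S2 D, expands S S2 H2 D I M' /\ T' D M').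

Definition operator S := forall D : Type, struct4 S D -> struct4 S D.

Definition is_propagator S (T : theory S) (O : operator S) : Prop :=
  forall (D : Type) (I : struct4 S D),
    le_p S D I (O D I) /\
    (forall M : struct2 S D, T D M -> le_p S D I (emb2 S D M) -> le_p S D (O D I) (emb2 S D M)).

Definition monotone_op S (O : operator S) : Prop :=
  forall (D : Type) (I J : struct4 S D), le_p S D I J -> le_p S D (O D I) (O D J).

(* O(I) = O'(I + bot_{S' \ S})|_S. *)
Definition induced_op S S' (H : S `<=` S') (O' : operator S') : operator S :=
  fun D I =>
    restrict4 S S' H D
      (O' D (restrict4 S' (S `|` (S' `\` S)) (fsubset_USD S S') D
               (plus4 S (S' `\` S) D I (bot4 (S' `\` S) D)))).

End Structures.

Arguments emb2 {Sym ar S D} M.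
Arguments le_p {Sym ar S D} I J.
Arguments restrict4 {Sym ar S0 S} H {D} I.
Arguments restrict2 {Sym ar S0 S} H {D} M.
Arguments bot4 {Sym ar} S D.
Arguments plus4 {Sym ar S1 S2 D} I J.
Arguments theory {Sym} ar S.
Arguments expands {Sym ar S S1} H {D} I M.
Arguments sigma_equiv {Sym ar S S1 S2} H1 H2 T T'.
Arguments operator {Sym} ar S.
Arguments is_propagator {Sym ar S} T O.
Arguments monotone_op {Sym ar S} O.
Arguments induced_op {Sym ar S S'} H O'.

(* Main.v *)
Require Import Defs.
From mathcomp Require Import all_boot finmap.
Local Open Scope fset_scope.

Section A.
Variables (Sym : choiceType) (ar : Sym -> nat) (S S' : {fset Sym}) (D : Type).

Lemma Xin (I : struct4 Sym ar S D) P (hS : P \in S) h t :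
  restrict4 (@fsubset_USD _ S S') (plus4 I (bot4 (S' `\` S) D)) P h t = I P hS t.
Proof.
rewrite /restrict4 /plus4.
move: (fsubsetP _ _) => h'.
generalize (erefl (P \in S)); generalize (P \in S) at 2 3.
intros b e; destruct b; simpl; first by rewrite (bool_irrelevance e hS).
by exfalso; move: e; rewrite hS.
Qed.

Lemma Xout (I : struct4 Sym ar S D) P (hS : (P \in S) = false) h t :
  restrict4 (@fsubset_USD _ S S') (plus4 I (bot4 (S' `\` S) D)) P h t = Fu.
Proof.
rewrite /restrict4 /plus4.
move: (fsubsetP _ _) => h'.
generalize (erefl (P \in S)); generalize (P \in S) at 2 3.
by intros b e; destruct b; simpl; [exfalso; move: e; rewrite hS|].
Qed.

Lemma leq_p_refl a : leq_p a a.
Proof. by case: a. Qed.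

Lemma leq_p_trans a b c : leq_p a b -> leq_p b c -> leq_p a c.
Proof. by case: a; case: b; case: c. Qed.

End A.

Theorem proposition3p3 (Sym : choiceType) (ar : Sym -> nat)
    (S S' : {fset Sym}) (HS : S `<=` S')
    (T : theory ar S) (T' : theory ar S')
    (Heq : sigma_equiv (fsubset_refl S) HS T T')
    (O' : operator ar S') :
  (is_propagator T' O' -> is_propagator T (induced_op HS O')) /\
  (monotone_op O' -> monotone_op (induced_op HS O')).
Proof.
split.
- move=> Hp D I.
  set X := restrict4 (@fsubset_USD _ S S') (plus4 I (bot4 (S' `\` S) D)).
  have [H1 H2] := Hp D X.
  split.
  + move=> P h t; rewrite /induced_op -/X /restrict4.
    have := H1 P (fsubsetP HS P h) t.
    by rewrite /X (Xin _ _ _ _ _ _ _ h).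
  + move=> M TM IM.
    have [M' [EM' TM']] : exists M' : struct2 Sym ar S' D,
        expands HS M M' /\ T' D M'.
      apply/Heq; exists M; split => // P h t.
      by rewrite /restrict2 (bool_irrelevance (fsubsetP (fsubset_refl S) P h) h).
    have XM : le_p X (emb2 M').
      move=> P h t; case hS: (P \in S).
        rewrite /X (Xin _ _ _ _ _ _ _ hS).
        have := IM P hS t; rewrite /emb2.
        by have := EM' P hS t; rewrite /restrict2 (bool_irrelevance (fsubsetP HS P hS) h) => ->.
      by rewrite /X (Xout _ _ _ _ _ _ _ hS).
    move=> P h t; have := H2 M' TM' XM P (fsubsetP HS P h) t.
    rewrite /induced_op -/X /restrict4 /emb2.
    by have := EM' P h t; rewrite /restrict2 => ->.
- move=> Hm D I J IJ P h t.
  rewrite /induced_op /restrict4.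
  apply: Hm => Q hQ u.
  have E1 := Xin _ _ _ S' _ I Q.
  have E2 := Xin _ _ _ S' _ J Q.
  have F1 := Xout _ _ _ S' _ I Q.
  have F2 := Xout _ _ _ S' _ J Q.
  rewrite /restrict4 in E1 E2 F1 F2.
  case hS: (Q \in S).
    by rewrite (E1 hS) (E2 hS); apply: IJ.
  by rewrite (F1 hS) (F2 hS).
Qed.
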